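(* Suppose Assumptions 1 and 3 hold and $\boldsymbol{x}\notin\mathcal{Z}$. Then $H(\rho)$ is nonincreasing on $(0,\infty)$. Furthermore, the Lagrange multiplier $\rho^*$ of the KKT system of the projection of $\boldsymbol{x}$ onto $\mathcal{Z}$ satisfies $\rho^*>0$, and $h<0$ for every $h\in\mathcal{K}_H(\rho^* )$.
   Context: Assumption 1: $l:\mathbb{R}\to\mathbb{R}$ is nondecreasing and convex, and $\inf_x l(x)<\lambda$. Assumption 3: $l$ is differentiable and nonconstant, and $l'$ is semismooth with respect to its Clarke subdifferential $\partial l'$. $\mathcal{Z}=\{\boldsymbol{z}\in\mathbb{R}^m:\frac1m\sum_i l(z_i)\le\lambda\}$. The projection problem is $\min_{\boldsymbol{u}}\frac12\|\boldsymbol{u}-\boldsymbol{x}\|^2$ s.t. $\boldsymbol{u}\in\mathcal{Z}$, with KKT system $u_i-x_i+\frac{\rho}{m}l'(u_i)=0$ for all $i$, $\rho(\frac1m\sum_i l(u_i)-\lambda)=0$, $\rho\ge0$, $\frac1m\sum_il(u_i)\le\lambda$. $L(\boldsymbol{u})=\sum_i l(u_i)$, $\nabla L(\boldsymbol{u})=(l'(u_i))_i$, $\partial\nabla L(\boldsymbol{u})=\{\mathrm{diag}(\eta_1,\dots,\eta_m):\eta_i\in\partial l'(u_i)\}$. For $\rho>0$, $\boldsymbol{u}(\rho)$ is the unique solution of $\boldsymbol{u}-\boldsymbol{x}+\frac{\rho}{m}\nabla L(\boldsymbol{u})=\boldsymbol{0}$, $H(\rho)=L(\boldsymbol{u}(\rho))-m\lambda$,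 and $\mathcal{K}_H(\rho)=\{-\nabla L(\boldsymbol{u})^\top(m\mathbf{I}_m+\rho\Lambda)^{-1}\nabla L(\boldsymbol{u}):\Lambda\in\partial\nabla L(\boldsymbol{u})\}$ with $\boldsymbol{u}=\boldsymbol{u}(\rho)$. *)

(* Defs.v *)
From HB Require Import structures.
From mathcomp Require Import all_boot all_order all_algebra.
From mathcomp Require Import all_classical all_reals all_analysis.
Set Implicit Arguments. Unset Strict Implicit. Unset Printing Implicit Defensive.
Import Order.TTheory GRing.Theory Num.Theory.
Import numFieldNormedType.Exports.
Local Open Scope classical_set_scope.
Local Open Scope ring_scope.

Section Defs.
Variable R : realType.

Definition l_nondecreasing (l : R -> R) : Prop :=
  forall a b : R, a <= b -> l a <= l b.

Definition l_convex (l : R -> R) : Prop :=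
  forall (a b t : R), 0 <= t -> t <= 1 ->
    l (t * a + (1 - t) * b) <= t * l a + (1 - t) * l b.

Definition inf_lt (l : R -> R) (lam : R) : Prop := exists a : R, l a < lam.

Definition Assumption1 (l : R -> R) (lam : R) : Prop :=
  [/\ l_nondecreasing l, l_convex l & inf_lt l lam].

Definition Bsubdiff (g : R -> R) (a : R) : set R :=
  [set v | exists xs : nat -> R,
      [/\ forall k, derivable g (xs k) 1,
          xs @ \oo --> a &
          (fun k => (derive1 g) (xs k)) @ \oo --> v]].

Definition convex_hull (S : set R) : set R :=
  [set v | exists (n : nat) (w p : 'I_n -> R),
      [/\ forall i, 0 <= w i, \sum_(i < n) w i = 1,
          forall i, S (p i) & v = \sum_(i < n) w i * p i]].

Definition clarke (g : R -> R) (a : R) : set R := convex_hull (Bsubdiff g a).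

Definition locally_lipschitz_at (g : R -> R) (a : R) : Prop :=
  exists (r K : R), 0 < r /\
    forall y z, `|y - a| < r -> `|z - a| < r -> `|g y - g z| <= K * `|y - z|.

Definition dir_differentiable_at (g : R -> R) (a : R) : Prop :=
  forall d : R, exists Ld : R,
    (fun t => (g (a + t * d) - g a) / t) @ at_right 0 --> Ld.

Definition semismooth_at (g : R -> R) (a : R) : Prop :=
  [/\ locally_lipschitz_at g a, dir_differentiable_at g a &
      forall eps : R, 0 < eps -> exists delta : R, 0 < delta /\
        forall h V : R, `|h| < delta -> clarke g (a + h) V ->
          `|g (a + h) - g a - V * h| <= eps * `|h| ].

Definition Assumption3 (l : R -> R) : Prop :=
  [/\ forall a : R, derivable l a 1,
      exists a b : R, l a != l b &
      forall a : R, semismooth_at (derive1 l) a].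

Definition Lsum (l : R -> R) (m : nat) (u : 'cV[R]_m) : R :=
  \sum_(i < m) l (u i 0).

Definition gradL (l : R -> R) (m : nat) (u : 'cV[R]_m) : 'cV[R]_m :=
  \col_i (derive1 l) (u i 0).

Definition Zset (l : R -> R) (lam : R) (m : nat) : set 'cV[R]_m :=
  [set z | m%:R^-1 * Lsum l z <= lam].

Definition KKT (l : R -> R) (lam : R) (m : nat) (x u : 'cV[R]_m) (rho : R) : Prop :=
  [/\ forall i, u i 0 - x i 0 + rho / m%:R * (derive1 l) (u i 0) = 0,
      rho * (m%:R^-1 * Lsum l u - lam) = 0,
      0 <= rho &
      m%:R^-1 * Lsum l u <= lam].

Definition ueq (l : R -> R) (m : nat) (x : 'cV[R]_m) (rho : R) : set 'cV[R]_m :=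
  [set u | u - x + (rho / m%:R) *: gradL l u = 0].

Definition usol (l : R -> R) (m : nat) (x : 'cV[R]_m) (rho : R) : 'cV[R]_m :=
  xget 0 (ueq l x rho).

Definition Hfun (l : R -> R) (lam : R) (m : nat) (x : 'cV[R]_m) (rho : R) : R :=
  Lsum l (usol l x rho) - m%:R * lam.

Definition gen_jac (l : R -> R) (m : nat) (u : 'cV[R]_m) : set 'M[R]_m :=
  [set Lam | exists eta : 'rV[R]_m,
      (forall i, clarke (derive1 l) (u i 0) (eta 0 i)) /\ Lam = diag_mx eta].

Definition KH (l : R -> R) (m : nat) (x : 'cV[R]_m) (rho : R) : set R :=
  [set h | exists Lam : 'M[R]_m,
      gen_jac l (usol l x rho) Lam /\
      h = - (((gradL l (usol l x rho))^T
               *m invmx (m%:R%:M + rho *: Lam)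
               *m gradL l (usol l x rho)) 0 0)].

End Defs.

(* Main.v *)
Require Import Defs.
From HB Require Import structures.
From mathcomp Require Import all_boot all_order all_algebra.
From mathcomp Require Import all_classical all_reals all_analysis.
From mathcomp Require Import ring lra.
Import Order.TTheory GRing.Theory Num.Theory.
Import numFieldNormedType.Exports.
Set Implicit Arguments. Unset Strict Implicit.
Local Open Scope classical_set_scope.
Local Open Scope ring_scope.

Section Aux.
Variable R : realType.

Lemma D_le (f : R -> R) a v c : derivable f a v ->
  (forall h : R, 0 < h -> h < 1 -> h^-1 * (f (h * v + a) - f a) <= c) ->
  'D_v f a <= c.
Proof.
move=> df H; rewrite /derive (cvg_at_rightE _ _ df); apply: limr_le.
  by apply/cvgP; apply: cvg_dnbhs_at_right; exact: df.
near=> h; rewrite /=; apply: H.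
  by near: h; exact: nbhs_right_gt.
by near: h; apply: nbhs_right_lt.
Unshelve. all: end_near. Qed.

Lemma D_ge (f : R -> R) a v c : derivable f a v ->
  (forall h : R, 0 < h -> h < 1 -> c <= h^-1 * (f (h * v + a) - f a)) ->
  c <= 'D_v f a.
Proof.
move=> df H; rewrite /derive (cvg_at_rightE _ _ df); apply: limr_ge.
  by apply/cvgP; apply: cvg_dnbhs_at_right; exact: df.
near=> h; rewrite /=; apply: H.
  by near: h; exact: nbhs_right_gt.
by near: h; apply: nbhs_right_lt.
Unshelve. all: end_near. Qed.

Lemma derive1_dir (f : R -> R) a v : derivable f a 1 ->
  derivable f a v /\ 'D_v f a = v * derive1 f a.
Proof.
move=> df; have dif : differentiable f a by apply/derivable1_diffP.
split; first exact: diff_derivable.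
by rewrite deriveE // deriv1E.
Qed.

Lemma tangent (l : R -> R) : l_convex l -> (forall a, derivable l a 1) ->
  forall a b, derive1 l a * (b - a) <= l b - l a.
Proof.
move=> conv dl a b; have [dv Dv] := @derive1_dir l a (b - a) (dl a).
rewrite mulrC -Dv; apply: D_le dv _ => h h0 h1.
have := conv b a h (ltW h0) (ltW h1).
have -> : h * b + (1 - h) * a = h * (b - a) + a by ring.
move=> H; rewrite mulrC ler_pdivrMr //; lra.
Qed.

Lemma dl_mono (l : R -> R) : l_convex l -> (forall a, derivable l a 1) ->
  forall a b, a <= b -> derive1 l a <= derive1 l b.
Proof.
move=> conv dl a b; rewrite le_eqVlt => /orP[/eqP -> //|ab].
have H1 := tangent conv dl a b; have H2 := tangent conv dl b a.
nra.
Qed.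

Lemma dl_ge0 (l : R -> R) : l_convex l -> l_nondecreasing l ->
  (forall a, derivable l a 1) -> forall a, 0 <= derive1 l a.
Proof.
move=> conv nd dl a; have H := tangent conv dl a (a - 1).
have : l (a - 1) <= l a by apply: nd; lra.
lra.
Qed.

Lemma nondec_deriv_ge0 (g : R -> R) : (forall a b, a <= b -> g a <= g b) ->
  forall a, derivable g a 1 -> 0 <= derive1 g a.
Proof.
move=> gnd a da; rewrite derive1E; apply: D_ge => // h h0 _.
rewrite mulr1; apply: mulr_ge0; first by rewrite invr_ge0 ltW.
rewrite subr_ge0; apply: gnd; lra.
Qed.

Lemma clarke_ge0 (g : R -> R) : (forall a b, a <= b -> g a <= g b) ->
  forall a v, clarke g a v -> 0 <= v.
Proof.
move=> gnd a v [n [w [p [w0 _ Sp ->]]]].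
apply: sumr_ge0 => i _; apply: mulr_ge0 => //.
have [xs [dx _ cv]] := Sp i.
apply: (cvgr_to_ge cv); near=> k; exact: nondec_deriv_ge0.
Unshelve. all: end_near. Qed.

Lemma lip_cont (g : R -> R) a : locally_lipschitz_at g a -> g @ a --> g a.
Proof.
case=> r [K [r0 HK]].
apply/cvgrPdist_lt => e e0.
have d0 : 0 < Num.min r (e / (`|K| + 1)) by rewrite lt_min r0 divr_gt0 // ltr_pwDr // normr_ge0.
near=> t.
have ht : `|a - t| < Num.min r (e / (`|K| + 1)).
  by near: t; apply: cvgr_dist_lt => //; exact: cvg_id.
move: ht; rewrite lt_min => /andP[htr hte].
have := HK a t; rewrite subrr normr0 => /(_ r0) H.
have Ht : `|t - a| < r.
  by move: htr; rewrite distrC.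
move: (H Ht) => {}H.
apply: (le_lt_trans H).
have K1 : 0 < `|K| + 1 by rewrite ltr_pwDr // normr_ge0.
apply: (@le_lt_trans _ _ ((`|K| + 1) * `|a - t|)).
  apply: ler_wpM2r; first exact: normr_ge0.
  apply: (le_trans (real_ler_norm _)); first exact: num_real.
  by rewrite lerDl.
by rewrite -ltr_pdivlMl // mulrC.
Unshelve. all: end_near. Qed.

Lemma exists_sol (l : R -> R) : l_convex l -> l_nondecreasing l -> (forall a, derivable l a 1) ->
  (forall a, derive1 l @ a --> derive1 l a) ->
  forall c y, 0 < c -> exists t, t + c * derive1 l t = y.
Proof.
move=> conv nd dl cont c y c0.
pose phi := fun t => t + c * derive1 l t.
have cphi : continuous phi.
  have : continuous ((fun t => t) + (fun t => c * derive1 l t)).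
    move=> t.
    have h1 : (fun s : R => s) @ t --> t := cvg_id.
    have h2 : (fun s => c * derive1 l s) @ t --> c * derive1 l t .
      by apply: cvgMl_tmp; exact: cont.
    have := cvgD h1 h2.
    by move=> /(_ _); apply; exact: nbhs_filter.
  by [].
have H0 := dl_ge0 conv nd dl y.
have [| | |t _ Ht] := @IVT R phi (y - c * derive1 l y) y y.
- rewrite lerBlDr lerDl; apply: mulr_ge0 => //; exact: ltW.
- exact: continuous_subspaceT.
- apply/andP; split.
    rewrite ge_min; apply/orP; left; rewrite /phi.
    have : derive1 l (y - c * derive1 l y) <= derive1 l y.
      apply: dl_mono => //; rewrite lerBlDr lerDl; apply: mulr_ge0 => //; exact: ltW.
    move=> H; nra.
  rewrite le_max; apply/orP; right; rewrite /phi lerDl; apply: mulr_ge0 => //; exact: ltW.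
- by exists t.
Qed.

Lemma compare (d : R -> R) : (forall a b, a <= b -> d a <= d b) ->
  (forall a, 0 <= d a) -> forall c1 c2 t1 t2 y, 0 <= c1 -> c1 <= c2 ->
  t1 + c1 * d t1 = y -> t2 + c2 * d t2 = y -> t2 <= t1.
Proof.
move=> dm d0 c1 c2 t1 t2 y c10 c12 e1 e2.
case: (lerP t2 t1) => // lt12.
have := dm _ _ (ltW lt12); have := d0 t2; nra.
Qed.

Lemma ueq_comp (l : R -> R) m (x u : 'cV[R]_m) rho : ueq l x rho u ->
  forall i, u i 0 + rho / m%:R * derive1 l (u i 0) = x i 0.
Proof.
move=> H i; have := congr1 (fun M : 'cV[R]_m => M i 0) H.
rewrite /gradL !mxE => /eqP; rewrite addrAC subr_eq0 => /eqP //.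
Qed.

Lemma ueq_build (l : R -> R) m (x u : 'cV[R]_m) rho :
  (forall i, u i 0 + rho / m%:R * derive1 l (u i 0) = x i 0) -> ueq l x rho u.
Proof.
move=> H; apply/matrixP => i j; rewrite (ord1 j) /gradL !mxE addrAC -(H i).
by rewrite subrr.
Qed.

Lemma aba_gt0 (a b : R) : 0 < b -> a != 0 -> 0 < a * b * a.
Proof. by move=> b0 a0; rewrite mulrAC -expr2 mulr_gt0 // exprn_even_gt0. Qed.

Lemma aba_ge0 (a b : R) : 0 < b -> 0 <= a * b * a.
Proof. by move=> b0; rewrite mulrAC -expr2 mulr_ge0 // ?sqr_ge0 // ltW. Qed.

End Aux.

Theorem mainTheorem10 (R : realType) (l : R -> R) (lam : R) (m : nat)
    (x : 'cV[R]_m) :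
  (0 < m)%N ->
  Assumption1 l lam -> Assumption3 l ->
  ~ Zset l lam x ->
  (forall rho1 rho2 : R, 0 < rho1 -> rho1 <= rho2 ->
     Hfun l lam x rho2 <= Hfun l lam x rho1) /\
  (forall (u : 'cV[R]_m) (rhostar : R), KKT l lam x u rhostar ->
     0 < rhostar /\ (forall h : R, KH l x rhostar h -> h < 0)).
Proof.
move=> m0 [nd conv [a0 la0]] [dl _ ss] nZ.
have cont : forall a, derive1 l @ a --> derive1 l a.
  by move=> a; have [lip _ _] := ss a; exact: lip_cont.
have dm := dl_mono conv dl; have d0 := dl_ge0 conv nd dl.
have mpos : 0 < m%:R :> R by rewrite ltr0n.
have solex : forall rho, 0 < rho -> ueq l x rho (usol l x rho).
  move=> rho r0; apply: xgetPex.
  have c0 : 0 < rho / m%:R by rewrite divr_gt0.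
  have /choice [f Hf] : forall i : 'I_m, exists t, t + rho / m%:R * derive1 l t = x i 0.
    by move=> i; exact: exists_sol.
  by exists (\col_i f i); apply: ueq_build => i; rewrite mxE; exact: Hf.
have uniq : forall rho u, 0 < rho -> ueq l x rho u -> usol l x rho = u.
  move=> rho u r0 hu; have hw := solex rho r0.
  apply/matrixP => i j; rewrite (ord1 j); apply/eqP; rewrite eq_le.
  have c0: 0 <= rho / m%:R by rewrite ltW // divr_gt0.
  rewrite (compare dm d0 c0 (lexx _) (ueq_comp hu i) (ueq_comp hw i)).
  by rewrite (compare dm d0 c0 (lexx _) (ueq_comp hw i) (ueq_comp hu i)).
split.
  move=> r1 r2 r10 r12.
  have r20 : 0 < r2 by apply: lt_le_trans r12.
  have w1 := solex _ r10; have w2 := solex _ r20.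
  rewrite /Hfun lerD2r /Lsum; apply: ler_sum => i _; apply: nd.
  apply: (compare dm d0 _ _ (ueq_comp w1 i) (ueq_comp w2 i)).
    by rewrite ltW // divr_gt0.
  by rewrite ler_pM2r // invr_gt0.
move=> u rho [e1 e2 r0 e4].
have rpos : 0 < rho.
  rewrite lt_def r0 andbT; apply/negP => /eqP r00; apply: nZ.
  have ux : u = x.
    apply/matrixP => i j; rewrite (ord1 j); have := e1 i.
    rewrite r00 !mul0r addr0 => /eqP; rewrite subr_eq0 => /eqP //.
  by rewrite /Zset /= -ux.
split => // h [Lam [[eta [heta ->]] ->]].
have hu : ueq l x rho u by apply: ueq_build => i; have := e1 i; lra.
rewrite (uniq _ _ rpos hu).
have eta0 : forall i, 0 <= eta 0 i by move=> i; exact: (clarke_ge0 dm (heta i)).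
pose d := \row_i (m%:R + rho * eta 0 i).
have dpos : forall i, 0 < d 0 i.
  by move=> i; rewrite mxE; have := mulr_ge0 (ltW rpos) (eta0 i); lra.
have hM : m%:R%:M + rho *: diag_mx eta = diag_mx d.
  apply/matrixP => i j; rewrite !mxE; case: (i == j) => /=.
    by rewrite !mulr1n.
  by rewrite !mulr0n mulr0 addr0.
pose dinv := \row_i (d 0 i)^-1.
have dpos' : forall i, 0 < dinv 0 i by move=> i; rewrite [dinv 0 i]mxE invr_gt0.
have hMi : diag_mx d *m diag_mx dinv = 1%:M.
  rewrite mulmx_diag; apply/matrixP => i j; rewrite !mxE.
  have := dpos i; rewrite mxE => /gt_eqF/negbT H; rewrite mulfV //.
have hinv : invmx (m%:R%:M + rho *: diag_mx eta) = diag_mx dinv.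
  rewrite hM; have [hu' _] := mulmx1_unit hMi.
  by rewrite -[RHS](mulKmx hu' (diag_mx dinv)) hMi mulmx1.
rewrite hinv mul_mx_diag oppr_lt0 !mxE.
under eq_bigr => j _ do rewrite !mxE.
have [[i gi]|hno] := pselect (exists i : 'I_m, derive1 l (u i 0) != 0); last first.
  exfalso; apply: nZ.
  have all0 : forall i, derive1 l (u i 0) = 0.
    by move=> i; case: (eqVneq (derive1 l (u i 0)) 0) => // hi; exfalso; apply: hno; exists i.
  have ux : u = x.
    apply/matrixP => i j; rewrite (ord1 j); have := e1 i.
    rewrite all0 mulr0 addr0 => /eqP; rewrite subr_eq0 => /eqP //.
  rewrite /Zset /= -ux.
  move/eqP: e2; rewrite mulf_eq0 (gt_eqF rpos) /= subr_eq0 => /eqP ->.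
  exact: lexx.
rewrite (bigD1 i) //=.
have ha := aba_gt0 (dpos' i) gi; rewrite !mxE in ha.
have hb : 0 <= \sum_(j < m | j != i)
     derive1 l (u j 0) / (m%:R + rho * eta 0 j) * derive1 l (u j 0).
  apply: sumr_ge0 => j _; have := aba_ge0 (derive1 l (u j 0)) (dpos' j).
  by rewrite !mxE.
lra.
Qed.
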